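(* Let $V$ be a Gödel set in which $0$ is an isolated point. Then 1-satisfiability in $G_V$ of sentences of the monadic fragment is decidable.
   Context: A Gödel set is a closed set $V\subseteq[0,1]$ with $0,1\in V$. A $V$-interpretation assigns to each $k$-ary predicate a function $U^k\to V$ on a nonempty domain $U$ (constants as usual); $\bot\mapsto0$, $\wedge,\vee$ are $\min,\max$, $\mathcal I(A\supset B)=1$ if $\mathcal I(A)\le\mathcal I(B)$ and $=\mathcal I(B)$ otherwise, $\forall,\exists$ are $\inf,\sup$ over $U$. A sentence is 1-satisfiable in $G_V$ if some $V$-interpretation gives it value $1$. The monadic fragment consists of first-order sentences (not necessarily prenex) whose predicate symbols are all unary and which contain no function symbols of positive arity. *)

(* Defs.v *)
From HB Require Import structures.
From mathcomp Require Import all_boot all_order all_algebra.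
From mathcomp Require Import all_classical all_reals all_analysis.
Set Implicit Arguments. Unset Strict Implicit. Unset Printing Implicit Defensive.
Import Order.TTheory GRing.Theory Num.Theory.
Import numFieldNormedType.Exports.
Local Open Scope classical_set_scope.
Local Open Scope ring_scope.

Definition godel_set (R : realType) (V : set R) : Prop :=
  [/\ closed V, (forall x, V x -> 0 <= x <= 1), V 0 & V 1].

Definition zero_isolated (R : realType) (V : set R) : Prop :=
  exists2 eps : R, 0 < eps & forall x, V x -> `|x| < eps -> x = 0.

(* Predicate symbols are all unary (indexed by nat); the only terms   *)
(* are variables and constants (no function symbols of positive arity)*)
Inductive mterm : Type :=
| TVar of nat
| TConst of nat.

Inductive mform : Type :=
| FBot
| FPred of nat & mterm
| FAnd of mform & mform
| FOr of mform & mform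
| FImp of mform & mform
| FAll of mform                 (* binds de Bruijn index 0 *)
| FEx of mform.

Definition term_closed (k : nat) (t : mterm) : bool :=
  match t with TVar n => (n < k)%N | TConst _ => true end.

Fixpoint form_closed (k : nat) (A : mform) : bool :=
  match A with
  | FBot => true
  | FPred _ t => term_closed k t
  | FAnd A B | FOr A B | FImp A B => form_closed k A && form_closed k B
  | FAll A | FEx A => form_closed k.+1 A
  end.

Definition sentence (A : mform) : bool := form_closed 0 A.

Definition scons (U : Type) (u : U) (e : nat -> U) : nat -> U :=
  fun n => match n with O => u | S m => e m end.

Section Sem.
Variables (R : realType) (U : Type).
Variables (cst : nat -> U) (prd : nat -> U -> R).

Definition term_val (e : nat -> U) (t : mterm) : U :=
  match t with TVar n => e n | TConst c => cst c end.

Definition goedel_imp (a b : R) : R := if a <= b then 1 else b.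

Fixpoint fval (e : nat -> U) (A : mform) : R :=
  match A with
  | FBot => 0
  | FPred p t => prd p (term_val e t)
  | FAnd A B => Order.min (fval e A) (fval e B)
  | FOr A B => Order.max (fval e A) (fval e B)
  | FImp A B => goedel_imp (fval e A) (fval e B)
  | FAll A => inf (range (fun u => fval (scons u e) A))
  | FEx A => sup (range (fun u => fval (scons u e) A))
  end.
End Sem.

(* A is 1-satisfiable in G_V: some V-interpretation (nonempty domain U,
   constants interpreted in U, unary predicates U -> V) gives A value 1.
   For a sentence the value does not depend on the environment; we
   evaluate under the constant environment at an element of U. *)
Definition one_satisfiable (R : realType) (V : set R) (A : mform) : Prop :=
  exists (U : Type) (u0 : U) (cst : nat -> U) (prd : nat -> U -> R),
    (forall p u, V (prd p u)) /\ fval cst prd (fun _ => u0) A = 1.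

Inductive recfun : Type :=
| RZero
| RSucc
| RProj of nat
| RComp of recfun & list recfun
| RPrec of recfun & recfun
| RMin of recfun.

Inductive reval : recfun -> list nat -> nat -> Prop :=
| EvZero xs : reval RZero xs 0
| EvSucc x xs : reval RSucc (x :: xs) x.+1
| EvProj i xs : (i < size xs)%N -> reval (RProj i) xs (nth 0%N xs i)
| EvComp f gs xs ys y :
    revals gs xs ys -> reval f ys y -> reval (RComp f gs) xs y
| EvPrec0 f g xs y : reval f xs y -> reval (RPrec f g) (0%N :: xs) y
| EvPrecS f g n xs y z :
    reval (RPrec f g) (n :: xs) y -> reval g (n :: y :: xs) z ->
    reval (RPrec f g) (n.+1 :: xs) z
| EvMin f xs n :
    reval f (n :: xs) 0 ->
    (forall m, (m < n)%N -> exists k, reval f (m :: xs) k.+1) ->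
    reval (RMin f) xs n
with revals : list recfun -> list nat -> list nat -> Prop :=
| EvsNil xs : revals nil xs nil
| EvsCons g gs xs y ys :
    reval g xs y -> revals gs xs ys -> revals (g :: gs) xs (y :: ys).

Definition cpair (a b : nat) : nat := ((a + b) * (a + b).+1)./2 + b.

Definition code_term (t : mterm) : nat :=
  match t with TVar n => cpair 0 n | TConst c => cpair 1 c end.

Fixpoint code (A : mform) : nat :=
  match A with
  | FBot => cpair 0 0
  | FPred p t => cpair 1 (cpair p (code_term t))
  | FAnd A B => cpair 2 (cpair (code A) (code B))
  | FOr A B => cpair 3 (cpair (code A) (code B))
  | FImp A B => cpair 4 (cpair (code A) (code B))
  | FAll A => cpair 5 (code A)
  | FEx A => cpair 6 (code A)
  end.

Definition decidable_on_sentences (P : mform -> Prop) : Prop :=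
  exists f : recfun, forall A : mform, sentence A ->
    (P A -> reval f [:: code A] 1) /\ (~ P A -> reval f [:: code A] 0).

(* Main.v *)
Require Import Defs.
From HB Require Import structures.
From mathcomp Require Import all_boot all_order all_algebra.
From mathcomp Require Import all_classical all_reals all_analysis.
From Stdlib Require Import Classical.
Import Order.TTheory GRing.Theory Num.Theory.
Import numFieldNormedType.Exports.
Local Open Scope classical_set_scope.
Local Open Scope ring_scope.
From mathcomp Require Import zify.
From mathcomp Require Import lra.
Local Open Scope nat_scope.

Lemma projE i xs y : i < size xs -> y = nth 0 xs i -> reval (RProj i) xs y.
Proof. by move=> H ->; apply: EvProj. Qed.
Ltac pj := apply: projE; [done|done].

Fixpoint constF (k : nat) : recfun :=
  match k with O => RZero | S k => RComp RSucc [:: constF k] end.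

Lemma comp1 f g xs y z : reval g xs y -> reval f [:: y] z -> reval (RComp f [:: g]) xs z.
Proof. by move=> Hg Hf; apply: (EvComp (ys := [:: y])) => //; apply: EvsCons => //; apply: EvsNil. Qed.
Lemma comp2 f g h xs y1 y2 z : reval g xs y1 -> reval h xs y2 -> reval f [:: y1; y2] z ->
  reval (RComp f [:: g; h]) xs z.
Proof.
move=> Hg Hh Hf; apply: (EvComp (ys := [:: y1; y2])) => //.
by apply: EvsCons => //; apply: EvsCons => //; apply: EvsNil.
Qed.
Lemma succE x xs y : y = x.+1 -> reval RSucc (x :: xs) y.
Proof. by move=> ->; apply: EvSucc. Qed.
Lemma zeroE xs y : y = 0 -> reval RZero xs y.
Proof. by move=> ->; apply: EvZero. Qed.

Lemma constF_ok k xs : reval (constF k) xs k.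
Proof.
elim: k => [|k IH] /=; first exact: EvZero.
by apply: comp1; [exact IH|apply: succE].
Qed.

Definition ADD := RPrec (RProj 0) (RComp RSucc [:: RProj 1]).
Lemma ADD_ok a b : reval ADD [:: a; b] (a + b).
Proof.
elim: a => [|a IH]; first by apply: EvPrec0; pj.
apply: (EvPrecS IH); apply: comp1; first by pj.
by apply: succE.
Qed.

Definition MUL := RPrec RZero (RComp ADD [:: RProj 1; RProj 2]).
Lemma MUL_ok a b : reval MUL [:: a; b] (a * b).
Proof.
elim: a => [|a IH]; first by apply: EvPrec0; apply: zeroE.
apply: (EvPrecS IH); apply: comp2; [pj|pj|].
by rewrite mulSn addnC; apply: ADD_ok.
Qed.

Definition POWr := RPrec (constF 1) (RComp MUL [:: RProj 1; RProj 2]).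
Lemma POWr_ok n a : reval POWr [:: n; a] (a ^ n).
Proof.
elim: n => [|n IH]; first by apply: EvPrec0; apply: constF_ok.
apply: (EvPrecS IH); apply: comp2; [pj|pj|].
by rewrite expnSr; apply: MUL_ok.
Qed.

Definition PRED := RPrec RZero (RProj 0).
Lemma PRED_ok n : reval PRED [:: n] n.-1.
Proof.
elim: n => [|n IH]; first by apply: EvPrec0; apply: zeroE.
by apply: (EvPrecS IH); pj.
Qed.

Definition SUBr := RPrec (RProj 0) (RComp PRED [:: RProj 1]).
Lemma SUBr_ok n x : reval SUBr [:: n; x] (x - n).
Proof.
elim: n => [|n IH]; first by rewrite subn0; apply: EvPrec0; pj.
apply: (EvPrecS IH); apply: comp1; first by pj.
by rewrite subnS; apply: PRED_ok.
Qed.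

Definition SUB2 := RComp SUBr [:: RProj 1; RProj 0].
Lemma SUB2_ok x y : reval SUB2 [:: x; y] (x - y).
Proof. by apply: comp2; [pj|pj|apply: SUBr_ok]. Qed.

Definition SG := RPrec RZero (constF 1).
Lemma SG_ok n : reval SG [:: n] (n > 0).
Proof.
case: n => [|n]; first by apply: EvPrec0; apply: zeroE.
have H : reval SG [:: n] (n > 0).
  elim: n => [|n IH]; first by apply: EvPrec0; apply: zeroE.
  by apply: (EvPrecS IH); apply: constF_ok.
by apply: (EvPrecS H); apply: constF_ok.
Qed.

Definition NSG := RPrec (constF 1) RZero.
Lemma NSG_ok n : reval NSG [:: n] (n == 0).
Proof.
case: n => [|n]; first by apply: EvPrec0; apply: constF_ok.
have H : reval NSG [:: n] (n == 0).
  elim: n => [|n IH]; first by apply: EvPrec0; apply: constF_ok.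
  by apply: (EvPrecS IH); apply: zeroE.
by apply: (EvPrecS H); apply: zeroE.
Qed.

Definition mymod (n d : nat) : nat :=
  nat_rec (fun _ => nat) 0 (fun _ r => if r.+1 < d then r.+1 else 0) n.

Definition MODr := RPrec RZero
  (RComp MUL [:: RComp RSucc [:: RProj 1];
                 RComp SG [:: RComp SUB2 [:: RProj 2; RComp RSucc [:: RProj 1]]]]).
Lemma MODr_ok n d : reval MODr [:: n; d] (mymod n d).
Proof.
elim: n => [|n IH]; first by apply: EvPrec0; apply: zeroE.
apply: (EvPrecS IH).
set r := mymod n d.
have E1 : reval (RComp RSucc [:: RProj 1]) [:: n; r; d] r.+1.
  by apply: comp1; [pj|apply: succE].
apply: comp2; first exact: E1.
  apply: comp1; last exact: SG_ok.
  apply: comp2; [pj|exact: E1|exact: SUB2_ok].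
have -> : mymod n.+1 d = r.+1 * (0 < d - r.+1).
  by rewrite /= -/r subn_gt0; case: ifP; rewrite ?muln1 ?muln0.
exact: MUL_ok.
Qed.

Lemma mymodE n d : 0 < d -> mymod n d = n %% d.
Proof.
move=> d0; elim: n => [|n IH] /=; first by rewrite mod0n.
rewrite -/(mymod n d) IH.
have lt := ltn_pmod n d0.
case: ifP => H.
  by rewrite -[n.+1]addn1 -modnDml addn1 (modn_small H).
have E : (n %% d).+1 = d.
  by apply/eqP; rewrite eqn_leq lt leqNgt H.
by rewrite -[n.+1]addn1 -modnDml addn1 E modnn.
Qed.

Definition digit (b X i : nat) : nat := X %/ b ^ i %% b.

Lemma mod_split b X i : 0 < b -> X %% b ^ i.+1 = digit b X i * b ^ i + X %% b ^ i.
Proof.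
move=> b0; have Bi : 0 < b ^ i by rewrite expn_gt0 b0.
rewrite /digit.
set q := X %/ b ^ i; set r := X %% b ^ i.
have EX : X = (q %/ b) * b ^ i.+1 + ((q %% b) * b ^ i + r).
  rewrite {1}(divn_eq X (b ^ i)) -/q -/r {1}(divn_eq q b) expnSr.
  rewrite mulnDl addnA; congr (_ + _ + _); by rewrite -mulnA [b * b ^ i]mulnC.
have lt : (q %% b) * b ^ i + r < b ^ i.+1.
  have Hr : r < b ^ i by rewrite /r ltn_pmod.
  have Hq : q %% b < b by rewrite ltn_pmod.
  rewrite expnSr; apply: (@leq_trans ((q %% b).+1 * b ^ i)).
    by rewrite mulSn addnC ltn_add2r.
  by rewrite mulnC leq_pmul2l.
by rewrite {1}EX modnMDl modn_small.
Qed.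

Lemma digit_lt b X i : 0 < b -> digit b X i < b.
Proof. by move=> b0; rewrite /digit ltn_pmod. Qed.

Lemma digitIsE b X i r : 0 < b ->
  (r * b ^ i < mymod X (b ^ (i + 1)) + 1) && (mymod X (b ^ (i + 1)) < (r + 1) * b ^ i)
  = (digit b X i == r).
Proof.
move=> b0; have Bi : 0 < b ^ i by rewrite expn_gt0 b0.
rewrite mymodE ?expn_gt0 ?b0 // !addn1 mod_split //.
set d := digit b X i; have Hm : X %% b ^ i < b ^ i by rewrite ltn_pmod.
set m := X %% b ^ i.
apply/idP/eqP.
  case/andP=> H1 H2; apply/eqP; rewrite eqn_leq; apply/andP; split.
    rewrite -ltnS -(ltn_pmul2r Bi); exact: (leq_ltn_trans (leq_addr m _) H2).
  rewrite -ltnS -(ltn_pmul2r Bi); apply: (leq_trans H1).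
  by rewrite mulSn [b ^ i + _]addnC ltn_add2l.
move=> <-; apply/andP; split; first by rewrite ltnS leq_addr.
by rewrite mulSn [b ^ i + _]addnC ltn_add2l.
Qed.

Lemma cpair_double a b : (cpair a b).*2 = (a + b) * (a + b).+1 + b.*2.
Proof.
rewrite /cpair doubleD even_halfK //.
by rewrite oddM oddS; case: (odd (a + b)).
Qed.

Lemma cpair_eqE c a b : (c = cpair a b) <-> (2 * c = (a + b) * (a + b + 1) + 2 * b).
Proof.
rewrite !mul2n addn1 -cpair_double; split; first by move=> ->.
by move/double_inj.
Qed.

Lemma cpair_inj {a b a' b' : nat} : cpair a b = cpair a' b' -> a = a' /\ b = b'.
Proof.
move=> E; have := cpair_double a b; have := cpair_double a' b'; rewrite E => H1 H2.
have Hs : a + b = a' + b'.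
  apply/eqP; rewrite eqn_leq; apply/andP; split; rewrite leqNgt; apply/negP => lt.
    have : (a' + b') * (a' + b').+1 + b'.*2 < (a + b) * (a + b).+1 + b.*2 by nia.
    by rewrite -H1 -H2 ltnn.
  have : (a + b) * (a + b).+1 + b.*2 < (a' + b') * (a' + b').+1 + b'.*2 by nia.
  by rewrite -H1 -H2 ltnn.
have Hb : b = b' by move: H1 H2; rewrite Hs; nia.
by split; lia.
Qed.

Lemma cpair_geq1 a b : a <= cpair a b.
Proof. have := cpair_double a b; rewrite -!muln2 => H; nia. Qed.
Lemma cpair_geq2 a b : b <= cpair a b.
Proof. have := cpair_double a b; rewrite -!muln2 => H; nia. Qed.
Lemma cpair_gt5 c : c < cpair 5 c.
Proof. have := cpair_double 5 c; rewrite -!muln2 => H; nia. Qed.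

Inductive aexp : Type :=
| AVar of nat | ACst of nat | AAdd of aexp & aexp | AMul of aexp & aexp
| APow of aexp & aexp | AMod of aexp & aexp.

Fixpoint aeval (env : seq nat) (a : aexp) : nat :=
  match a with
  | AVar i => nth 0 env i
  | ACst k => k
  | AAdd a b => aeval env a + aeval env b
  | AMul a b => aeval env a * aeval env b
  | APow a b => aeval env a ^ aeval env b
  | AMod a b => mymod (aeval env a) (aeval env b)
  end.

Fixpoint awf (k : nat) (a : aexp) : bool :=
  match a with
  | AVar i => i < k
  | ACst _ => true
  | AAdd a b | AMul a b | APow a b | AMod a b => awf k a && awf k b
  end.

Inductive bfm : Type :=
| BLt of aexp & aexp | BEq of aexp & aexp | BNot of bfm | BAnd of bfm & bfm
| BOr of bfm & bfm | BImp of bfm & bfm | BIff of bfm & bfm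
| BEx of aexp & bfm | BAll of aexp & bfm
| BDig of aexp & aexp & aexp & aexp | BCp of aexp & aexp & aexp.

Fixpoint holds (env : seq nat) (f : bfm) : Prop :=
  match f with
  | BLt a b => aeval env a < aeval env b
  | BEq a b => aeval env a = aeval env b
  | BNot f => ~ holds env f
  | BAnd f g => holds env f /\ holds env g
  | BOr f g => holds env f \/ holds env g
  | BImp f g => holds env f -> holds env g
  | BIff f g => holds env f <-> holds env g
  | BEx t f => exists y, y < aeval env t /\ holds (y :: env) f
  | BAll t f => forall y, y < aeval env t -> holds (y :: env) f
  | BDig b X i r => 0 < aeval env b /\ digit (aeval env b) (aeval env X) (aeval env i) = aeval env r
  | BCp a b c => aeval env c = cpair (aeval env a) (aeval env b)
  end.

Fixpoint bwf (k : nat) (f : bfm) : bool :=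
  match f with
  | BLt a b | BEq a b => awf k a && awf k b
  | BNot f => bwf k f
  | BAnd f g | BOr f g | BImp f g | BIff f g => bwf k f && bwf k g
  | BEx t f | BAll t f => awf k t && bwf k.+1 f
  | BDig b X i r => [&& awf k b, awf k X, awf k i & awf k r]
  | BCp a b c => [&& awf k a, awf k b & awf k c]
  end.

Fixpoint compA (a : aexp) : recfun :=
  match a with
  | AVar i => RProj i
  | ACst k => constF k
  | AAdd a b => RComp ADD [:: compA a; compA b]
  | AMul a b => RComp MUL [:: compA a; compA b]
  | APow a b => RComp POWr [:: compA b; compA a]
  | AMod a b => RComp MODr [:: compA a; compA b]
  end.

Lemma compA_ok a env : awf (size env) a -> reval (compA a) env (aeval env a).
Proof.
elim: a => [i|k|a IHa b IHb|a IHa b IHb|a IHa b IHb|a IHa b IHb] /=.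
- by move=> H; apply: EvProj.
- by move=> _; apply: constF_ok.
- by case/andP=> Ha Hb; apply: comp2; [exact: IHa|exact: IHb|exact: ADD_ok].
- by case/andP=> Ha Hb; apply: comp2; [exact: IHa|exact: IHb|exact: MUL_ok].
- by case/andP=> Ha Hb; apply: comp2; [exact: IHb|exact: IHa|exact: POWr_ok].
- by case/andP=> Ha Hb; apply: comp2; [exact: IHa|exact: IHb|exact: MODr_ok].
Qed.

Definition projs j k := map RProj (iota j k).

Lemma projs_ok j k xs : j + k <= size xs -> revals (projs j k) xs (take k (drop j xs)).
Proof.
elim: k j => [|k IH] j H /=; first by rewrite take0; apply: EvsNil.
have Hj : j < size xs by rewrite -(addn1 j); apply: leq_trans H; rewrite leq_add2l.
rewrite (drop_nth 0 Hj) /=; apply: EvsCons; first exact: EvProj.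
by apply: IH; rewrite addSnnS.
Qed.

Definition OR := RComp SG [:: ADD].
Lemma OR_ok a b : reval OR [:: a; b] (0 < a + b).
Proof. by apply: comp1; [exact: ADD_ok|exact: SG_ok]. Qed.

Definition EXr k c := RPrec RZero (RComp OR [:: RProj 1; RComp c (RProj 0 :: projs 2 k)]).

Lemma EXr_ok k c (P : nat -> Prop) env : size env = k ->
  (forall y, reval c (y :: env) `[< P y >]) ->
  forall n, reval (EXr k c) (n :: env) `[< exists y, y < n /\ P y >].
Proof.
move=> Hs Hc; elim=> [|n IH].
  by apply: EvPrec0; apply: zeroE; rewrite asboolF //; move=> [y []].
apply: (EvPrecS IH); apply: comp2; first by apply: EvProj.
  apply: (EvComp (ys := n :: env)); last exact: Hc.
  apply: EvsCons; first by apply: EvProj.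
  have := projs_ok 2 k [:: n, nat_of_bool `[< exists y, y < n /\ P y >] & env].
  by rewrite /= Hs drop0 -Hs take_size; apply; rewrite Hs.
set b1 := `[< _ >]; set b2 := `[< P n >].
suff -> : `[< exists y, y < n.+1 /\ P y >] = b1 || b2.
  by rewrite /=; have := OR_ok b1 b2; case: b1; case: b2.
rewrite /b1 /b2; apply: asbool_equiv_eqP; first by apply: orP.
split.
  move=> [y [Hy HP]]; rewrite ltnS leq_eqVlt in Hy; case/orP: Hy => Hy.
    by right; rewrite -(eqP Hy); apply/asboolP.
  by left; apply/asboolP; exists y.
case=> /asboolP; last by move=> H; exists n.
by move=> [y [Hy HP]]; exists y; split=> //; apply: ltnW.
Qed.

Definition ltR (a b : aexp) := RComp SG [:: RComp SUB2 [:: compA b; compA a]].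
Definition eqR (a b : aexp) := RComp NSG [:: RComp ADD [:: RComp SUB2 [:: compA a; compA b];
                                          RComp SUB2 [:: compA b; compA a]]].
Lemma ltR_ok a b env : awf (size env) a -> awf (size env) b ->
  reval (ltR a b) env (aeval env a < aeval env b).
Proof.
move=> Ha Hb; apply: (comp1 _ _ _ (aeval env b - aeval env a)); last first.
  by have := SG_ok (aeval env b - aeval env a); rewrite subn_gt0.
by apply: comp2; [exact: compA_ok|exact: compA_ok|exact: SUB2_ok].
Qed.
Lemma eqR_ok a b env : awf (size env) a -> awf (size env) b ->
  reval (eqR a b) env (aeval env a == aeval env b).
Proof.
move=> Ha Hb.
apply: (comp1 _ _ _ ((aeval env a - aeval env b) + (aeval env b - aeval env a))); last first.
  have := NSG_ok ((aeval env a - aeval env b) + (aeval env b - aeval env a)).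
  by rewrite addn_eq0 !subn_eq0 -eqn_leq.
apply: comp2; last exact: ADD_ok.
  by apply: comp2; [exact: compA_ok|exact: compA_ok|exact: SUB2_ok].
by apply: comp2; [exact: compA_ok|exact: compA_ok|exact: SUB2_ok].
Qed.

Definition digR b X i r :=
  let B := APow b i in
  let m := AMod X (APow b (AAdd i (ACst 1))) in
  RComp MUL [:: ltR (ACst 0) b;
     RComp MUL [:: ltR (AMul r B) (AAdd m (ACst 1)); ltR m (AMul (AAdd r (ACst 1)) B)]].
Definition cpR a b c :=
  eqR (AMul (ACst 2) c) (AAdd (AMul (AAdd a b) (AAdd (AAdd a b) (ACst 1))) (AMul (ACst 2) b)).

Definition IMPr (cf cg : recfun) := RComp OR [:: RComp NSG [:: cf]; cg].

Fixpoint compB (k : nat) (f : bfm) : recfun :=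
  match f with
  | BLt a b => RComp SG [:: RComp SUB2 [:: compA b; compA a]]
  | BEq a b => RComp NSG [:: RComp ADD [:: RComp SUB2 [:: compA a; compA b];
                                          RComp SUB2 [:: compA b; compA a]]]
  | BNot f => RComp NSG [:: compB k f]
  | BAnd f g => RComp MUL [:: compB k f; compB k g]
  | BOr f g => RComp OR [:: compB k f; compB k g]
  | BImp f g => IMPr (compB k f) (compB k g)
  | BIff f g => RComp MUL [:: IMPr (compB k f) (compB k g); IMPr (compB k g) (compB k f)]
  | BEx t f => RComp (EXr k (compB k.+1 f)) (compA t :: projs 0 k)
  | BAll t f => RComp NSG [:: RComp (EXr k (RComp NSG [:: compB k.+1 f])) (compA t :: projs 0 k)]
  | BDig b X i r => digR b X i r
  | BCp a b c => cpR a b c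
  end.

Lemma IMPr_ok cf cg env (P Q : Prop) : reval cf env `[< P >] -> reval cg env `[< Q >] ->
  reval (IMPr cf cg) env `[< P -> Q >].
Proof.
move=> Hf Hg; apply: comp2; [|exact: Hg|].
  by apply: comp1; [exact: Hf|exact: NSG_ok].
have := OR_ok (nat_of_bool `[< P >] == 0) `[< Q >].
by rewrite asbool_imply; case: `[< P >]; case: `[< Q >].
Qed.

Lemma compB_ok f k env : size env = k -> bwf k f ->
  reval (compB k f) env `[< holds env f >].
Proof.
elim: f k env => [a b|a b|f IH|f IHf g IHg|f IHf g IHg|f IHf g IHg|f IHf g IHg|t f IH|t f IH|b X i r|a b c] k env Hs /=.
- case/andP=> Ha Hb; rewrite -Hs in Ha Hb.
  apply: (comp1 _ _ _ (aeval env b - aeval env a)); last first.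
    by have := SG_ok (aeval env b - aeval env a); rewrite subn_gt0 asboolb.
  by apply: comp2; [exact: compA_ok|exact: compA_ok|exact: SUB2_ok].
- case/andP=> Ha Hb; rewrite -Hs in Ha Hb.
  apply: (comp1 _ _ _ ((aeval env a - aeval env b) + (aeval env b - aeval env a))); last first.
    have := NSG_ok ((aeval env a - aeval env b) + (aeval env b - aeval env a)).
    rewrite addn_eq0 !subn_eq0 -eqn_leq.
    by rewrite (asbool_equiv_eqP (Q := aeval env a = aeval env b) (b := (aeval env a == aeval env b))) //; apply: eqP.
  apply: comp2; last exact: ADD_ok.
    by apply: comp2; [exact: compA_ok|exact: compA_ok|exact: SUB2_ok].
  by apply: comp2; [exact: compA_ok|exact: compA_ok|exact: SUB2_ok].
- move=> Hf; apply: comp1; first exact: (IH k env).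
  have := NSG_ok `[< holds env f >].
  by rewrite asbool_neg; case: `[< holds env f >].
- case/andP=> Hf Hg; apply: comp2; [exact: IHf|exact: IHg|].
  have := MUL_ok `[< holds env f >] `[< holds env g >].
  by rewrite asbool_and; case: `[< holds env f >]; case: `[< holds env g >].
- case/andP=> Hf Hg; apply: comp2; [exact: IHf|exact: IHg|].
  have := OR_ok `[< holds env f >] `[< holds env g >].
  by rewrite asbool_or; case: `[< holds env f >]; case: `[< holds env g >].
- by case/andP=> Hf Hg; apply: IMPr_ok; [exact: IHf|exact: IHg].
- case/andP=> Hf Hg; apply: comp2.
  + by apply: IMPr_ok; [exact: IHf|exact: IHg].
  + by apply: IMPr_ok; [exact: IHg|exact: IHf].
  have := MUL_ok `[< holds env f -> holds env g >] `[< holds env g -> holds env f >].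
  rewrite (asbool_equiv_eq (P := holds env f <-> holds env g) (Q := (holds env f -> holds env g) /\ (holds env g -> holds env f))) //.
  by rewrite asbool_and; case: `[< holds env f -> holds env g >]; case: `[< holds env g -> holds env f >].
- case/andP=> Ht Hf.
  apply: (EvComp (ys := aeval env t :: env)).
    apply: EvsCons; first by apply: compA_ok; rewrite Hs.
    have := projs_ok 0 k env.
    by rewrite drop0 -Hs take_size; apply.
  apply: (EXr_ok k (compB k.+1 f) (fun y => holds (y :: env) f) env Hs _ (aeval env t)).
  by move=> y; apply: IH => //=; rewrite Hs.
- case/andP=> Ht Hf.
  apply: comp1.
    apply: (EvComp (ys := aeval env t :: env)).
      apply: EvsCons; first by apply: compA_ok; rewrite Hs.
      have := projs_ok 0 k env.
      by rewrite drop0 -Hs take_size; apply.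
    apply: (EXr_ok k _ (fun y => ~ holds (y :: env) f) env Hs _ (aeval env t)).
    move=> y; apply: comp1; first by apply: IH => //=; rewrite Hs.
    have := NSG_ok `[< holds (y :: env) f >].
    by rewrite asbool_neg; case: `[< holds (y :: env) f >].
  set P := exists y, _.
  have := NSG_ok `[< P >].
  rewrite (asbool_equiv_eq (P := forall y, y < aeval env t -> holds (y :: env) f) (Q := ~ P)) ?asbool_neg; first by case: `[< P >].
  split.
    by move=> H [y [Hy Hn]]; apply: Hn; apply: H.
  by move=> H y Hy; apply: NNPP => Hn; apply: H; exists y.
- case/and4P=> Hb HX Hi Hr; rewrite -Hs in Hb HX Hi Hr.
  apply: comp2.
  + by apply: ltR_ok.
  + apply: comp2; last exact: MUL_ok.
      by apply: ltR_ok => /=; rewrite ?Hb ?HX ?Hi ?Hr.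
    by apply: ltR_ok => /=; rewrite ?Hb ?HX ?Hi ?Hr.
  set vb := aeval env b; set vX := aeval env X; set vi := aeval env i; set vr := aeval env r.
  suff -> : nat_of_bool `[< 0 < vb /\ digit vb vX vi = vr >]
     = (0 < vb) * ((vr * vb ^ vi < mymod vX (vb ^ (vi + 1)) + 1) *
                   (mymod vX (vb ^ (vi + 1)) < (vr + 1) * vb ^ vi)) by apply: MUL_ok.
  case: (posnP vb) => b0.
    by rewrite /= asboolF //; case.
  rewrite mul1n mulnb (digitIsE _ _ _ _ b0).
  congr nat_of_bool.
  apply: (asbool_equiv_eqP (b := (digit vb vX vi == vr))).
    exact: eqP.
  by split; [case|split].
- case/and3P=> Ha Hb Hc; rewrite -Hs in Ha Hb Hc.
  have := eqR_ok (AMul (ACst 2) c)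
    (AAdd (AMul (AAdd a b) (AAdd (AAdd a b) (ACst 1))) (AMul (ACst 2) b)) env.
  rewrite /= Ha Hb Hc => /(_ isT isT) H.
  rewrite (asbool_equiv_eqP (P := aeval env c = cpair (aeval env a) (aeval env b))
     (Q := 2 * aeval env c = (aeval env a + aeval env b) * (aeval env a + aeval env b + 1) + 2 * aeval env b)
     (b := 2 * aeval env c == (aeval env a + aeval env b) * (aeval env a + aeval env b + 1) + 2 * aeval env b)) //.
  - exact: eqP.
  - exact: cpair_eqE.
Qed.

Local Open Scope ring_scope.

Fixpoint truth {D : Type} (dom : D -> Prop) (cst : nat -> D) (atom : nat -> D -> Prop)
   (e : nat -> D) (A : mform) : Prop :=
  match A with
  | FBot => False
  | FPred p t => atom p (term_val cst e t)
  | FAnd A B => truth dom cst atom e A /\ truth dom cst atom e B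
  | FOr A B => truth dom cst atom e A \/ truth dom cst atom e B
  | FImp A B => truth dom cst atom e A -> truth dom cst atom e B
  | FAll A => forall u, dom u -> truth dom cst atom (scons u e) A
  | FEx A => exists u, dom u /\ truth dom cst atom (scons u e) A
  end.

Definition Inv {R : realType} (eps v : R) := v = 0 \/ (eps <= v /\ v <= 1).

Lemma Inv_ge0 {R : realType} {eps v : R} : 0 < eps -> Inv eps v -> 0 <= v.
Proof. by move=> e0 [->|[]] *; lra. Qed.

Lemma Inv_min {R : realType} {eps a b : R} : 0 < eps -> Inv eps a -> Inv eps b ->
  Inv eps (Order.min a b) /\ (Order.min a b <> 0 <-> a <> 0 /\ b <> 0).
Proof.
move=> e0 Ha Hb; have a0 := Inv_ge0 e0 Ha; have b0 := Inv_ge0 e0 Hb.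
rewrite minEle; case: ifP => H.
  split; first done.
  split; last by case.
  by move=> Ha0; split=> // Hb0; apply: Ha0; lra.
have H' : b < a by rewrite ltNge H.
split; first done.
split; last by case.
by move=> Hb0; split=> // Ha0; apply: Hb0; lra.
Qed.

Lemma Inv_max {R : realType} {eps a b : R} : 0 < eps -> Inv eps a -> Inv eps b ->
  Inv eps (Order.max a b) /\ (Order.max a b <> 0 <-> a <> 0 \/ b <> 0).
Proof.
move=> e0 Ha Hb; have a0 := Inv_ge0 e0 Ha; have b0 := Inv_ge0 e0 Hb.
rewrite maxEle; case: ifP => H.
  split; first done.
  split; first by right.
  by case=> // Ha0 Hb0; apply: Ha0; lra.
have H' : b < a by rewrite ltNge H.
split; first done.
split; first by left.
by case=> // Hb0 Ha0; apply: Hb0; lra.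
Qed.

Lemma Inv_imp {R : realType} {eps a b : R} : 0 < eps -> eps <= 1 -> Inv eps a -> Inv eps b ->
  Inv eps (goedel_imp a b) /\ (goedel_imp a b <> 0 <-> (a <> 0 -> b <> 0)).
Proof.
move=> e0 e1 Ha Hb; have a0 := Inv_ge0 e0 Ha; have b0 := Inv_ge0 e0 Hb.
rewrite /goedel_imp; case: ifP => H.
  split; first by right; split; lra.
  by split=> // *; lra.
have H' : b < a by rewrite ltNge H.
split=> //; split; first by move=> *.
by move=> Hab; apply: Hab; lra.
Qed.

Lemma Inv_inf {R : realType} {U : Type} (u0 : U) {eps : R} {f : U -> R} :
  0 < eps -> (forall u, Inv eps (f u)) ->
  Inv eps (inf (range f)) /\ (inf (range f) <> 0 <-> forall u, f u <> 0).
Proof.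
move=> e0 Hf.
have ne : range f !=set0 by exists (f u0), u0.
have lb0 : lbound (range f) 0.
  move=> _ [u _ <-]; by case: (Hf u) => [->|[]] *; lra.
have hl : has_lbound (range f) by exists 0.
have infle : forall u, inf (range f) <= f u.
  by move=> u; apply: (ge_inf hl); exists u.
have inf0 : 0 <= inf (range f) by apply: lb_le_inf.
case: (classic (exists u, f u = 0)) => [[u Hu]|Hn].
  have E : inf (range f) = 0 by have := infle u; rewrite Hu => ?; lra.
  rewrite E; split; first by left.
  by split=> // H; have := H u.
have Hall : forall u, eps <= f u <= 1.
  move=> u; case: (Hf u) => [H|[]]; last by move=> -> ->.
  by exfalso; apply: Hn; exists u.
have ge : eps <= inf (range f).
  by apply: lb_le_inf => // _ [u _ <-]; have /andP[] := Hall u.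
have le1 : inf (range f) <= 1 by have := infle u0; have /andP[] := Hall u0 => *; lra.
split; first by right; split.
split=> [_ u Hu|_]; last by lra.
by apply: Hn; exists u.
Qed.

Lemma Inv_sup {R : realType} {U : Type} (u0 : U) {eps : R} {f : U -> R} :
  0 < eps -> (forall u, Inv eps (f u)) ->
  Inv eps (sup (range f)) /\ (sup (range f) <> 0 <-> exists u, f u <> 0).
Proof.
move=> e0 Hf.
have ne : range f !=set0 by exists (f u0), u0.
have ub1 : ubound (range f) 1.
  move=> _ [u _ <-]; by case: (Hf u) => [->|[]] *; lra.
have hu : has_ubound (range f) by exists 1.
have lesup : forall u, f u <= sup (range f).
  by move=> u; apply: (ub_le_sup hu); exists u.
have sup1 : sup (range f) <= 1 by apply: ge_sup.
case: (classic (exists u, f u <> 0)) => [[u Hu]|Hn].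
  have Hu' : eps <= f u by case: (Hf u) => [//|[]].
  have := lesup u => H.
  split; first by right; split=> //; lra.
  by split=> [_|_]; [exists u|lra].
have Hall : forall u, f u = 0 by move=> u; apply: NNPP => H; apply: Hn; exists u.
have E : sup (range f) = 0.
  have : sup (range f) <= 0 by apply: ge_sup => // _ [u _ <-]; rewrite Hall.
  by have := lesup u0; rewrite Hall => *; lra.
by rewrite E; split; [left|split].
Qed.

Lemma fval_truth (R : realType) (U : Type) (u0 : U) (cst : nat -> U) (prd : nat -> U -> R)
  (eps : R) : 0 < eps -> eps <= 1 -> (forall p u, Inv eps (prd p u)) ->
  forall A e, Inv eps (fval cst prd e A) /\
    (fval cst prd e A <> 0 <-> truth (fun _ => True) cst (fun p u => prd p u <> 0) e A).
Proof.
move=> e0 e1 Hp; elim=> [|p t|A IA B IB|A IA B IB|A IA B IB|A IA|A IA] e /=.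
- by split; [left|split].
- by split; [apply: Hp|].
- have [IA1 IA2] := IA e; have [IB1 IB2] := IB e.
  have [H1 H2] := Inv_min e0 IA1 IB1; split=> //; rewrite H2; tauto.
- have [IA1 IA2] := IA e; have [IB1 IB2] := IB e.
  have [H1 H2] := Inv_max e0 IA1 IB1; split=> //; rewrite H2; tauto.
- have [IA1 IA2] := IA e; have [IB1 IB2] := IB e.
  have [H1 H2] := Inv_imp e0 e1 IA1 IB1; split=> //; rewrite H2; tauto.
- have [H1 H2] := Inv_inf u0 (f := fun u => fval cst prd (scons u e) A) e0 (fun u => proj1 (IA (scons u e))).
  split=> //; rewrite H2; split=> H u; first by move=> _; apply/(proj2 (IA _)).
  by apply/(proj2 (IA _)); apply: H.
- have [H1 H2] := Inv_sup u0 (f := fun u => fval cst prd (scons u e) A) e0 (fun u => proj1 (IA (scons u e))).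
  split=> //; rewrite H2; split=> [[u Hu]|[u [_ Hu]]]; exists u.
    by split=> //; apply/(proj2 (IA _)).
  by apply/(proj2 (IA _)).
Qed.

Local Open Scope nat_scope.

Definition bounded_term (x : nat) (t : mterm) : bool :=
  match t with TVar _ => true | TConst c => c <= x end.

Fixpoint bounded (x : nat) (A : mform) : bool :=
  match A with
  | FBot => true
  | FPred p t => (p <= x) && bounded_term x t
  | FAnd A B | FOr A B | FImp A B => bounded x A && bounded x B
  | FAll A | FEx A => bounded x A
  end.

Fixpoint qdepth (A : mform) : nat :=
  match A with
  | FBot | FPred _ _ => 0
  | FAnd A B | FOr A B | FImp A B => maxn (qdepth A) (qdepth B)
  | FAll A | FEx A => (qdepth A).+1
  end.

Lemma cp_le1 {a b c m : nat} : cpair a (cpair b c) <= m -> b <= m.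
Proof. move=> H; apply: leq_trans H; apply: leq_trans (cpair_geq2 _ _); exact: cpair_geq1. Qed.
Lemma cp_le2 {a b c m : nat} : cpair a (cpair b c) <= m -> c <= m.
Proof. move=> H; apply: leq_trans H; apply: leq_trans (cpair_geq2 _ _); exact: cpair_geq2. Qed.
Lemma cp_le {a b m : nat} : cpair a b <= m -> b <= m.
Proof. move=> H; apply: leq_trans H; exact: cpair_geq2. Qed.

Lemma bounded_code A m : Defs.code A <= m -> bounded m A.
Proof.
elim: A m => [|p t|A IA B IB|A IA B IB|A IA B IB|A IA|A IA] m //= H.
- apply/andP; split; first exact: cp_le1 H.
  case: t H => [n|c] //= H; have := cp_le2 H; move/(leq_trans (cpair_geq2 _ _)) => //.
- by rewrite (IA _ (cp_le1 H)) (IB _ (cp_le2 H)).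
- by rewrite (IA _ (cp_le1 H)) (IB _ (cp_le2 H)).
- by rewrite (IA _ (cp_le1 H)) (IB _ (cp_le2 H)).
- by apply: IA; apply: cp_le H.
- by apply: IA; apply: cp_le H.
Qed.

Lemma qdepth_code A : qdepth A <= Defs.code A.
Proof.
elim: A => [|p t|A IA B IB|A IA B IB|A IA B IB|A IA|A IA] //=;
  try (by rewrite geq_max; apply/andP; split;
         [apply: leq_trans IA _; apply: cp_le1 (leqnn _)|apply: leq_trans IB _; apply: cp_le2 (leqnn _)]).
- apply: leq_ltn_trans IA _; exact: cpair_gt5.
- apply: leq_ltn_trans IA _.
  have := cpair_double 6 (Defs.code A); rewrite -!muln2 => H; nia.
Qed.

Lemma code_inj A B : Defs.code A = Defs.code B -> A = B.
Proof.
elim: A B => [|p t|A IA B IB|A IA B IB|A IA B IB|A IA|A IA] [|p' t'|A' B'|A' B'|A' B'|A'|A'] /= E;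
  try done; try (by have [] := cpair_inj E);
  try (by have [E1 E2] := cpair_inj E; have [E3 E4] := cpair_inj E2;
          rewrite (IA _ E3) (IB _ E4)).
- have [_ E2] := cpair_inj E; have [E3 E4] := cpair_inj E2.
  rewrite E3; congr FPred; move: E4; clear E E2.
  case: t => [n|c]; case: t' => [n'|c'] /= E4; have [E5 E6] := cpair_inj E4;
    by [rewrite E6|discriminate E5].
- by have [_ E2] := cpair_inj E; rewrite (IA _ E2).
- by have [_ E2] := cpair_inj E; rewrite (IA _ E2).
Qed.

Lemma truth_hom {D1 D2 : Type} (dom1 : D1 -> Prop) (dom2 : D2 -> Prop)
  (cst1 : nat -> D1) (cst2 : nat -> D2) (atom1 : nat -> D1 -> Prop) (atom2 : nat -> D2 -> Prop)
  (h : D1 -> D2) (x : nat) :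
  (forall u, dom1 u -> dom2 (h u)) -> (forall v, dom2 v -> exists u, dom1 u /\ h u = v) ->
  (forall p u, p <= x -> (atom1 p u <-> atom2 p (h u))) ->
  (forall c, c <= x -> h (cst1 c) = cst2 c) ->
  forall A, bounded x A -> forall e,
    truth dom1 cst1 atom1 e A <-> truth dom2 cst2 atom2 (fun n => h (e n)) A.
Proof.
move=> Hd Hs Ha Hc; elim=> [|p t|A IA B IB|A IA B IB|A IA B IB|A IA|A IA] //= Hb e.
- case/andP: Hb => Hp Ht; rewrite Ha //.
  by case: t Ht => [n|c] //= Hc'; rewrite Hc.
- case/andP: Hb => HA HB; rewrite IA // IB //.
- case/andP: Hb => HA HB; rewrite IA // IB //.
- case/andP: Hb => HA HB; rewrite IA // IB //.
- have E : forall u, (fun n => h (scons u e n)) = scons (h u) (fun n => h (e n)).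
    by move=> u; apply: funext => -[].
  split=> H.
    move=> v /Hs [u [Hu <-]]; rewrite -E -IA //; exact: H.
  by move=> u Hu; rewrite IA // E; apply: H; apply: Hd.
- have E : forall u, (fun n => h (scons u e n)) = scons (h u) (fun n => h (e n)).
    by move=> u; apply: funext => -[].
  split=> [[u [Hu H]]|[v [Hv H]]].
    by exists (h u); split; [apply: Hd|rewrite -E -IA].
  have [u [Hu Eu]] := Hs v Hv; exists u; split=> //.
  by rewrite IA // E Eu.
Qed.

Lemma truth_closed {D : Type} (dom : D -> Prop) cst atom A k :
  form_closed k A -> forall e e', (forall n, n < k -> e n = e' n) ->
  (truth dom cst atom e A <-> truth dom cst atom e' A).
Proof.
elim: A k => [|p t|A IA B IB|A IA B IB|A IA B IB|A IA|A IA] k //= Hc e e' He.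
- by case: t Hc => [n|c] //= Hn; rewrite He.
- by case/andP: Hc => HA HB; rewrite (IA _ HA e e' He) (IB _ HB e e' He).
- by case/andP: Hc => HA HB; rewrite (IA _ HA e e' He) (IB _ HB e e' He).
- by case/andP: Hc => HA HB; rewrite (IA _ HA e e' He) (IB _ HB e e' He).
- have He' : forall u n, n < k.+1 -> scons u e n = scons u e' n.
    by move=> u [|n] //= Hn; apply: He.
  by split=> H u Hu; [rewrite -(IA _ Hc _ _ (He' u))|rewrite (IA _ Hc _ _ (He' u))]; apply: H.
- have He' : forall u n, n < k.+1 -> scons u e n = scons u e' n.
    by move=> u [|n] //= Hn; apply: He.
  by split=> -[u [Hu H]]; exists u; split=> //;
    [rewrite -(IA _ Hc _ _ (He' u))|rewrite (IA _ Hc _ _ (He' u))].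
Qed.

Definition trunc (x : nat) (f : nat -> nat) (n : nat) : nat := if n < x then f n else 0.

Fixpoint truthT (x : nat) (dom : nat -> Prop) (cst : nat -> nat) (atom : nat -> nat -> Prop)
   (e : nat -> nat) (A : mform) : Prop :=
  match A with
  | FBot => False
  | FPred p t => atom p (term_val cst e t)
  | FAnd A B => truthT x dom cst atom e A /\ truthT x dom cst atom e B
  | FOr A B => truthT x dom cst atom e A \/ truthT x dom cst atom e B
  | FImp A B => truthT x dom cst atom e A -> truthT x dom cst atom e B
  | FAll A => forall u, dom u -> truthT x dom cst atom (trunc x (scons u e)) A
  | FEx A => exists u, dom u /\ truthT x dom cst atom (trunc x (scons u e)) A
  end.

Lemma truthT_truth x dom cst atom A k :
  form_closed k A -> k + qdepth A <= x -> forall e,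
  (truthT x dom cst atom e A <-> truth dom cst atom e A).
Proof.
elim: A k => [|p t|A IA B IB|A IA B IB|A IA B IB|A IA|A IA] k /= Hc Hq e; try by [].
- case/andP: Hc => HA HB.
  have HqA : k + qdepth A <= x by apply: leq_trans Hq; rewrite leq_add2l leq_maxl.
  have HqB : k + qdepth B <= x by apply: leq_trans Hq; rewrite leq_add2l leq_maxr.
  by rewrite (IA _ HA HqA) (IB _ HB HqB).
- case/andP: Hc => HA HB.
  have HqA : k + qdepth A <= x by apply: leq_trans Hq; rewrite leq_add2l leq_maxl.
  have HqB : k + qdepth B <= x by apply: leq_trans Hq; rewrite leq_add2l leq_maxr.
  by rewrite (IA _ HA HqA) (IB _ HB HqB).
- case/andP: Hc => HA HB.
  have HqA : k + qdepth A <= x by apply: leq_trans Hq; rewrite leq_add2l leq_maxl.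
  have HqB : k + qdepth B <= x by apply: leq_trans Hq; rewrite leq_add2l leq_maxr.
  by rewrite (IA _ HA HqA) (IB _ HB HqB).
- have Hq' : k.+1 + qdepth A <= x by rewrite addSnnS.
  have E : forall u, truthT x dom cst atom (trunc x (scons u e)) A <-> truth dom cst atom (scons u e) A.
    move=> u; rewrite (IA _ Hc Hq'); apply: (truth_closed _ _ _ _ _ Hc) => n Hn.
    by rewrite /trunc (leq_trans Hn) //; apply: leq_trans Hq'; apply: leq_addr.
  by split=> H u Hu; [rewrite -E|rewrite E]; apply: H.
- have Hq' : k.+1 + qdepth A <= x by rewrite addSnnS.
  have E : forall u, truthT x dom cst atom (trunc x (scons u e)) A <-> truth dom cst atom (scons u e) A.
    move=> u; rewrite (IA _ Hc Hq'); apply: (truth_closed _ _ _ _ _ Hc) => n Hn.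
    by rewrite /trunc (leq_trans Hn) //; apply: leq_trans Hq'; apply: leq_addr.
  by split=> -[u [Hu H]]; exists u; split=> //; [rewrite -E|rewrite E].
Qed.

Local Open Scope nat_scope.

Definition V (d l : nat) := AVar (d - l.+1).
Definition Nt d := APow (ACst 2) (AAdd (V d 0) (ACst 1)).
Definition Bt d := APow (Nt d) (V d 0).
Definition bitF X i := BDig (ACst 2) X i (ACst 1).
Definition bT d c e := bitF (V d 3) (AAdd (AMul c (Bt d)) e).
Definition cc d := V d 4.
Definition ee d := V d 5.

Definition C0 := BImp (BCp (ACst 0) (ACst 0) (cc 6)) (BNot (bT 6 (cc 6) (ee 6))).
Definition C1 :=
 BAll (AAdd (cc 6) (ACst 1))
  (BImp (BCp (ACst 1) (V 7 6) (cc 7))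
   (BAll (AAdd (V 7 6) (ACst 1))
    (BAll (AAdd (V 8 6) (ACst 1))
     (BImp (BCp (V 9 7) (V 9 8) (V 9 6))
      (BAnd
        (BAll (AAdd (V 9 8) (ACst 1))
          (BImp (BCp (ACst 0) (V 10 9) (V 10 8))
            (BIff (bT 10 (cc 10) (ee 10))
                  (BEx (Nt 10) (BAnd (BDig (Nt 11) (ee 11) (V 11 9) (V 11 10)) (bitF (V 11 10) (V 11 7)))))))
        (BAll (AAdd (V 9 8) (ACst 1))
          (BImp (BCp (ACst 1) (V 10 9) (V 10 8))
            (BIff (bT 10 (cc 10) (ee 10))
                  (BEx (Nt 10) (BAnd (BDig (Nt 11) (V 11 2) (V 11 9) (V 11 10)) (bitF (V 11 10) (V 11 7)))))))))))).
Definition C2 tag (op : bfm -> bfm -> bfm) :=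
 BAll (AAdd (cc 6) (ACst 1))
   (BImp (BCp (ACst tag) (V 7 6) (cc 7))
     (BAll (AAdd (V 7 6) (ACst 1))
      (BAll (AAdd (V 8 6) (ACst 1))
        (BImp (BCp (V 9 7) (V 9 8) (V 9 6))
          (BIff (bT 9 (cc 9) (ee 9)) (op (bT 9 (V 9 7) (ee 9)) (bT 9 (V 9 8) (ee 9)))))))).
Definition C5 :=
 BAll (AAdd (cc 6) (ACst 1))
   (BImp (BCp (ACst 5) (V 7 6) (cc 7))
     (BIff (bT 7 (cc 7) (ee 7))
       (BAll (Nt 7)
         (BImp (bitF (V 8 1) (V 8 7)) (bT 8 (V 8 6) (AMod (AAdd (V 8 7) (AMul (Nt 8) (ee 8))) (Bt 8))))))).
Definition C6 :=
 BAll (AAdd (cc 6) (ACst 1))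
   (BImp (BCp (ACst 6) (V 7 6) (cc 7))
     (BIff (bT 7 (cc 7) (ee 7))
       (BEx (Nt 7)
         (BAnd (bitF (V 8 1) (V 8 7)) (bT 8 (V 8 6) (AMod (AAdd (V 8 7) (AMul (Nt 8) (ee 8))) (Bt 8))))))).
Definition ConsF := BAnd C0 (BAnd C1 (BAnd (C2 2 BAnd) (BAnd (C2 3 BOr) (BAnd (C2 4 BImp) (BAnd C5 C6))))).

Definition SATF :=
 BEx (APow (ACst 2) (Nt 1))
  (BEx (APow (Nt 2) (AAdd (V 2 0) (ACst 1)))
   (BEx (APow (ACst 2) (AMul (AAdd (V 3 0) (ACst 1)) (Bt 3)))
     (BAnd (BEx (Nt 4) (bitF (V 5 1) (V 5 4)))
     (BAnd (BAll (AAdd (V 4 0) (ACst 1)) (BAll (Nt 5)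
              (BImp (BDig (Nt 6) (V 6 2) (V 6 4) (V 6 5)) (bitF (V 6 1) (V 6 5)))))
     (BAnd (BAll (AAdd (V 4 0) (ACst 1)) (BAll (Bt 5) ConsF))
       (bT 4 (V 4 0) (ACst 0))))))).

Lemma SATF_wf : bwf 1 SATF.
Proof. by []. Qed.

Definition Nn x := 2 ^ (x + 1).
Definition Bn x := Nn x ^ x.
Definition bTP x T c e := digit 2 T (c * Bn x + e) = 1.
Definition sdom x S u := u < Nn x /\ digit 2 S u = 1.

Definition ConsClean x S Cst T c e :=
  (c = cpair 0 0 -> ~ bTP x T c e) /\
      (forall p n, c = cpair 1 (cpair p (cpair 0 n)) ->
          (bTP x T c e <-> digit 2 (digit (Nn x) e n) p = 1)) /\
      (forall p k, c = cpair 1 (cpair p (cpair 1 k)) ->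
          (bTP x T c e <-> digit 2 (digit (Nn x) Cst k) p = 1)) /\
      (forall a b, c = cpair 2 (cpair a b) -> (bTP x T c e <-> bTP x T a e /\ bTP x T b e)) /\
      (forall a b, c = cpair 3 (cpair a b) -> (bTP x T c e <-> bTP x T a e \/ bTP x T b e)) /\
      (forall a b, c = cpair 4 (cpair a b) -> (bTP x T c e <-> (bTP x T a e -> bTP x T b e))) /\
      (forall a, c = cpair 5 a -> (bTP x T c e <->
          forall u, sdom x S u -> bTP x T a ((u + Nn x * e) %% Bn x))) /\
      (forall a, c = cpair 6 a -> (bTP x T c e <->
          exists u, sdom x S u /\ bTP x T a ((u + Nn x * e) %% Bn x))).

Lemma and2P (P : Prop) : (0 < 2 /\ P) <-> P.
Proof. by split=> [[]|]. Qed.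

Lemma digex N d (Q : nat -> Prop) : 0 < N ->
  (exists y, y < N /\ (0 < N /\ d = y) /\ 0 < 2 /\ Q y) <-> (d < N /\ Q d).
Proof.
move=> N0; split; first by move=> [y [Hy [[_ ->] [_ HQ]]]].
by move=> [Hd HQ]; exists d.
Qed.

Lemma digit_ltN x e n : digit (Nn x) e n < Nn x.
Proof. by apply: digit_lt; rewrite /Nn expn_gt0. Qed.

Lemma Bn_gt0 x : 0 < Bn x.
Proof. by rewrite /Bn /Nn !expn_gt0. Qed.

Lemma cpl1 {t y c : nat} : c = cpair t y -> y < c + 1.
Proof. by move=> ->; rewrite addn1 ltnS cpair_geq2. Qed.
Lemma cpl2 {y0 y1 y : nat} : y = cpair y0 y1 -> y0 < y + 1.
Proof. by move=> ->; rewrite addn1 ltnS cpair_geq1. Qed.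
Lemma cpl3 {y0 y1 y : nat} : y = cpair y0 y1 -> y1 < y + 1.
Proof. by move=> ->; rewrite addn1 ltnS cpair_geq2. Qed.

Lemma ConsF_iff x S Cst T c e :
  holds [:: e; c; T; Cst; S; x] ConsF <-> ConsClean x S Cst T c e.
Proof.
have N0 : 0 < 2 ^ (x + 1) by rewrite expn_gt0.
have Bn0 := Bn_gt0 x.
rewrite /ConsF /C0 /C1 /C2 /C5 /C6 /ConsClean /bTP /sdom /Bn /Nn /=.
split.
- move=> [H0 [H1 [H2 [H3 [H4 [H5 H6]]]]]].
  split; first by move=> Ec Hb; apply: (H0 Ec).
  split.
    move=> p n Ec; have Ey : cpair p (cpair 0 n) = cpair p (cpair 0 n) by [].
    have [K _] := H1 _ (cpl1 Ec) Ec _ (cpl2 Ey) _ (cpl3 Ey) Ey.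
    have := K _ (cpl3 (erefl (cpair 0 n))) (erefl _).
    rewrite and2P digex // => ->; have := digit_ltN x e n; rewrite /Nn.
    by split; [case|].
  split.
    move=> p n Ec; have Ey : cpair p (cpair 1 n) = cpair p (cpair 1 n) by [].
    have [_ K] := H1 _ (cpl1 Ec) Ec _ (cpl2 Ey) _ (cpl3 Ey) Ey.
    have := K _ (cpl3 (erefl (cpair 1 n))) (erefl _).
    rewrite and2P digex // => ->; have := digit_ltN x Cst n; rewrite /Nn.
    by split; [case|].
  split.
    move=> a b Ec; have Ey : cpair a b = cpair a b by [].
    by have := H2 _ (cpl1 Ec) Ec _ (cpl2 Ey) _ (cpl3 Ey) Ey; rewrite !and2P.
  split.
    move=> a b Ec; have Ey : cpair a b = cpair a b by [].
    by have := H3 _ (cpl1 Ec) Ec _ (cpl2 Ey) _ (cpl3 Ey) Ey; rewrite !and2P.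
  split.
    move=> a b Ec; have Ey : cpair a b = cpair a b by [].
    by have := H4 _ (cpl1 Ec) Ec _ (cpl2 Ey) _ (cpl3 Ey) Ey; rewrite !and2P.
  split.
    move=> a Ec; have := H5 _ (cpl1 Ec) Ec; rewrite and2P => ->.
    split=> H u.
      by move=> [Hu Hs]; have := H u Hu; rewrite !and2P mymodE //; apply.
    by move=> Hu Hs; rewrite !and2P mymodE //; apply: H; split=> //; case: Hs.
  move=> a Ec; have := H6 _ (cpl1 Ec) Ec; rewrite and2P => ->.
  split.
    move=> [u [Hu [[_ Hs] [_ HT]]]]; exists u; split=> //.
    by rewrite -mymodE.
  move=> [u [[Hu Hs] HT]]; exists u; split=> //; split=> //; split=> //.
  by rewrite mymodE.
- move=> [K0 [K1 [K2 [K3 [K4 [K5 [K6 K7]]]]]]].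
  split; first by move=> Ec [_ Hb]; apply: (K0 Ec).
  split.
    move=> q _ Ec p _ t _ Eq; rewrite {}Eq in Ec.
    split=> n _ Et; rewrite {}Et in Ec; rewrite and2P digex //.
      by rewrite (K1 _ _ Ec); have := digit_ltN x e n; rewrite /Nn; split; [|case].
    by rewrite (K2 _ _ Ec); have := digit_ltN x Cst n; rewrite /Nn; split; [|case].
  split.
    by move=> q _ Ec a _ b _ Eq; rewrite {}Eq in Ec; rewrite !and2P; apply: K3.
  split.
    by move=> q _ Ec a _ b _ Eq; rewrite {}Eq in Ec; rewrite !and2P; apply: K4.
  split.
    by move=> q _ Ec a _ b _ Eq; rewrite {}Eq in Ec; rewrite !and2P; apply: K5.
  split.
    move=> a _ Ec; rewrite and2P (K6 _ Ec).
    split=> H u.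
      move=> Hu [_ Hs]; split=> //; rewrite mymodE //; exact: H.
    by move=> [Hu Hs]; have [_] := H u Hu (conj isT Hs); rewrite mymodE.
  move=> a _ Ec; rewrite and2P (K7 _ Ec).
  split.
    move=> [u [[Hu Hs] HT]]; exists u; split=> //; split=> //; split=> //.
    by rewrite mymodE.
  move=> [u [Hu [[_ Hs] [_ HT]]]]; exists u; split=> //.
  by rewrite -mymodE.
Qed.

Definition SATclean x := exists S Cst T,
  S < 2 ^ Nn x /\ Cst < Nn x ^ (x + 1) /\ T < 2 ^ ((x + 1) * Bn x) /\
  (exists u, sdom x S u) /\
  (forall c, c < x + 1 -> digit 2 S (digit (Nn x) Cst c) = 1) /\
  (forall c, c < x + 1 -> forall e, e < Bn x -> ConsClean x S Cst T c e) /\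
  bTP x T x 0.

Definition SATraw x :=
  exists S, S < 2 ^ (2 ^ (x + 1)) /\
  exists Cst, Cst < (2 ^ (x + 1)) ^ (x + 1) /\
  exists T, T < 2 ^ ((x + 1) * (2 ^ (x + 1)) ^ x) /\
   (exists u, u < 2 ^ (x + 1) /\ (0 < 2 /\ digit 2 S u = 1)) /\
   (forall c, c < x + 1 -> forall r, r < 2 ^ (x + 1) ->
       (0 < 2 ^ (x + 1) /\ digit (2 ^ (x + 1)) Cst c = r) -> (0 < 2 /\ digit 2 S r = 1)) /\
   (forall c, c < x + 1 -> forall e, e < (2 ^ (x + 1)) ^ x -> holds [:: e; c; T; Cst; S; x] ConsF) /\
   (0 < 2 /\ digit 2 T (x * (2 ^ (x + 1)) ^ x + 0) = 1).

Lemma SATF_raw x : holds [:: x] SATF = SATraw x.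
Proof. reflexivity. Qed.

Lemma SATF_iff x : holds [:: x] SATF <-> SATclean x.
Proof.
have N0 : 0 < 2 ^ (x + 1) by rewrite expn_gt0.
rewrite SATF_raw /SATraw /SATclean.
split.
  move=> [S [HS [Cst [HC [T [HT [[u [Hu [_ Hsu]]] [Hc [Hcons [_ Hx]]]]]]]]]].
  exists S, Cst, T; do 3 (split=> //); split; first by exists u.
  split.
    move=> c Hc'; have [_ ->] := Hc c Hc' (digit (2 ^ (x + 1)) Cst c) (digit_ltN x Cst c) (conj N0 erefl) => //.
  split; last exact: Hx.
  by move=> c Hc' e He; apply/ConsF_iff; apply: Hcons.
move=> [S [Cst [T [HS [HC [HT [[u Hu] [Hc [Hcons Hx]]]]]]]]].
exists S; split=> //; exists Cst; split=> //; exists T; split=> //.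
split; first by exists u; case: Hu => Hu1 Hu2; split.
split.
  by move=> c Hc' r Hr [_ <-]; split=> //; apply: Hc.
split; last by split; last exact: Hx.
by move=> c Hc' e He; apply/ConsF_iff; apply: Hcons.
Qed.

Local Open Scope nat_scope.

Lemma digit_addmul b X q i j : 0 < b -> i < j -> digit b (X + q * b ^ j) i = digit b X i.
Proof.
move=> b0 ij; rewrite /digit.
have Bi : 0 < b ^ i by rewrite expn_gt0 b0.
have E : b ^ j = (b ^ (j - i).-1 * b) * b ^ i.
  by rewrite -expnSr prednK ?subn_gt0 // -expnD subnK // ltnW.
by rewrite E mulnA divnDMl // mulnA addnC modnMDl.
Qed.

Lemma digit_top b X q j : 0 < b -> X < b ^ j -> q < b -> digit b (X + q * b ^ j) j = q.
Proof.
move=> b0 Xj qb; rewrite /digit divnDMl ?expn_gt0 ?b0 // divn_small // add0n.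
exact: modn_small.
Qed.

Lemma digit_mod b X x n : 0 < b -> n < x -> digit b (X %% b ^ x) n = digit b X n.
Proof.
move=> b0 nx; rewrite {2}(divn_eq X (b ^ x)) addnC digit_addmul //.
Qed.

Lemma digit_big b X n : 0 < b -> X < b ^ n -> digit b X n = 0.
Proof. by move=> b0 H; rewrite /digit divn_small // mod0n. Qed.

Lemma digit_shift0 b u e : 0 < b -> u < b -> digit b (u + b * e) 0 = u.
Proof. by move=> b0 ub; rewrite /digit expn0 divn1 mulnC addnC modnMDl modn_small. Qed.

Lemma digit_shiftS b u e n : 0 < b -> u < b -> digit b (u + b * e) n.+1 = digit b e n.
Proof.
by move=> b0 ub; rewrite /digit expnS divnMA [b * e]mulnC divnDMl // (divn_small ub) add0n.
Qed.

Lemma sum_digits b L (f : nat -> nat) : 0 < b -> (forall i, i < L -> f i < b) ->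
  \sum_(i < L) f i * b ^ i < b ^ L /\
  forall i, i < L -> digit b (\sum_(i < L) f i * b ^ i) i = f i.
Proof.
move=> b0; elim: L => [|L IH] Hf.
  by rewrite big_ord0 expn0; split=> // i.
have [IH1 IH2] := IH (fun i Hi => Hf i (ltnW Hi)).
rewrite big_ord_recr /=; split.
  apply: (@leq_trans (b ^ L + f L * b ^ L)); first by rewrite ltn_add2r.
  by rewrite -mulSn expnS leq_mul // Hf.
move=> i; rewrite ltnS leq_eqVlt; case/orP=> [/eqP ->|Hi].
  by apply: digit_top => //; apply: Hf.
by rewrite digit_addmul // IH2.
Qed.

Lemma Nn_gt0 x : 0 < Nn x.
Proof. by rewrite /Nn expn_gt0. Qed.

Lemma envOf_step x u e : u < Nn x ->
  (fun n => digit (Nn x) ((u + Nn x * e) %% Bn x) n) = trunc x (scons u (fun n => digit (Nn x) e n)).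
Proof.
move=> ux; apply: funext => n; rewrite /trunc /Bn.
case: ifP => nx.
  rewrite digit_mod ?Nn_gt0 //.
  by case: n nx => [|n] nx /=; [rewrite digit_shift0 ?Nn_gt0|rewrite digit_shiftS ?Nn_gt0].
apply: digit_big; first exact: Nn_gt0.
apply: (leq_trans (ltn_pmod _ _)); first by rewrite expn_gt0 Nn_gt0.
rewrite leq_exp2l; first by rewrite leqNgt nx.
by rewrite /Nn -{1}(expn0 2) ltn_exp2l // addn1.
Qed.

Local Open Scope nat_scope.

Definition unp (c : nat) : option (nat * nat) :=
  match pselect (exists ab : nat * nat, c = cpair ab.1 ab.2) with
  | left H => Some (sval (cid H))
  | right _ => None
  end.

Lemma unp_cpair a b : unp (cpair a b) = Some (a, b).
Proof.
rewrite /unp; case: pselect => [H|H]; last by exfalso; apply: H; exists (a, b).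
case: (cid H) => [[a' b'] /= E]; by have [-> ->] := cpair_inj E.
Qed.

Lemma unp_some {c a b : nat} : unp c = Some (a, b) -> c = cpair a b.
Proof.
rewrite /unp; case: pselect => [H|H] //.
by case: (cid H) => [[a' b'] /= E] [<- <-].
Qed.

Lemma cpair_gt t y : 0 < t -> y < cpair t y.
Proof.
move=> t0; rewrite -(ltn_pmul2l (isT : 0 < 2)) !mul2n cpair_double.
by rewrite -{1}(add0n y.*2) ltn_add2r muln_gt0 andbT addn_gt0 t0.
Qed.

Definition decBody (rec : nat -> mform) (c : nat) : mform :=
    match unp c with
    | Some (1, y) =>
        match unp y with
        | Some (p, t) =>
            match unp t with
            | Some (0, n) => FPred p (TVar n)
            | Some (1, k) => FPred p (TConst k)
            | _ => FBot
            end
        | None => FBot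
        end
    | Some (2, y) => match unp y with Some (a, b) => FAnd (rec a) (rec b) | None => FBot end
    | Some (3, y) => match unp y with Some (a, b) => FOr (rec a) (rec b) | None => FBot end
    | Some (4, y) => match unp y with Some (a, b) => FImp (rec a) (rec b) | None => FBot end
    | Some (5, a) => FAll (rec a)
    | Some (6, a) => FEx (rec a)
    | _ => FBot
    end.

Fixpoint decF (f c : nat) : mform :=
  match f with
  | 0 => FBot
  | f'.+1 => decBody (decF f') c
  end.

Lemma decF_S f c : decF f.+1 c = decBody (decF f) c.
Proof. by []. Qed.
Arguments decF : simpl never.

Lemma decF_stable f c g : c < f -> f <= g -> decF g c = decF f c.
Proof.
elim: f c g => [|f IH] c g // cf.
case: g => [|g] // fg; rewrite !decF_S /decBody.
have cf' : c <= f by [].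
case E1: (unp c) => [[t y]|] //.
have Hc := unp_some E1.
case: t E1 Hc => [|[|[|[|[|[|[|t]]]]]]] E1 Hc //;
  have yf : y < f by apply: leq_trans cf'; rewrite Hc cpair_gt.
- case E2: (unp y) => [[a b]|] //; have Hy := unp_some E2.
  have af : a < f by apply: leq_ltn_trans yf; rewrite Hy cpair_geq1.
  have bf : b < f by apply: leq_ltn_trans yf; rewrite Hy cpair_geq2.
  by rewrite !IH.
- case E2: (unp y) => [[a b]|] //; have Hy := unp_some E2.
  have af : a < f by apply: leq_ltn_trans yf; rewrite Hy cpair_geq1.
  have bf : b < f by apply: leq_ltn_trans yf; rewrite Hy cpair_geq2.
  by rewrite !IH.
- case E2: (unp y) => [[a b]|] //; have Hy := unp_some E2.
  have af : a < f by apply: leq_ltn_trans yf; rewrite Hy cpair_geq1.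
  have bf : b < f by apply: leq_ltn_trans yf; rewrite Hy cpair_geq2.
  by rewrite !IH.
- by rewrite IH.
- by rewrite IH.
Qed.

Definition dec c := decF c.+1 c.

Lemma decE f c : c < f -> decF f c = dec c.
Proof. by move=> cf; rewrite /dec (decF_stable c.+1 c f). Qed.

Lemma dec_and a b : dec (cpair 2 (cpair a b)) = FAnd (dec a) (dec b).
Proof.
have ac : a < cpair 2 (cpair a b) := leq_ltn_trans (cpair_geq1 a b) (cpair_gt 2 (cpair a b) isT).
have bc : b < cpair 2 (cpair a b) := leq_ltn_trans (cpair_geq2 a b) (cpair_gt 2 (cpair a b) isT).
by rewrite {1}/dec decF_S /decBody !unp_cpair /= !decE.
Qed.
Lemma dec_or a b : dec (cpair 3 (cpair a b)) = FOr (dec a) (dec b).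
Proof.
have ac : a < cpair 3 (cpair a b) := leq_ltn_trans (cpair_geq1 a b) (cpair_gt 3 (cpair a b) isT).
have bc : b < cpair 3 (cpair a b) := leq_ltn_trans (cpair_geq2 a b) (cpair_gt 3 (cpair a b) isT).
by rewrite {1}/dec decF_S /decBody !unp_cpair /= !decE.
Qed.
Lemma dec_imp a b : dec (cpair 4 (cpair a b)) = FImp (dec a) (dec b).
Proof.
have ac : a < cpair 4 (cpair a b) := leq_ltn_trans (cpair_geq1 a b) (cpair_gt 4 (cpair a b) isT).
have bc : b < cpair 4 (cpair a b) := leq_ltn_trans (cpair_geq2 a b) (cpair_gt 4 (cpair a b) isT).
by rewrite {1}/dec decF_S /decBody !unp_cpair /= !decE.
Qed.
Lemma dec_all a : dec (cpair 5 a) = FAll (dec a).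
Proof. by rewrite {1}/dec decF_S /decBody unp_cpair /= decE // cpair_gt. Qed.
Lemma dec_ex a : dec (cpair 6 a) = FEx (dec a).
Proof. by rewrite {1}/dec decF_S /decBody unp_cpair /= decE // cpair_gt. Qed.
Lemma dec_bot : dec (cpair 0 0) = FBot.
Proof. by rewrite /dec decF_S /decBody unp_cpair. Qed.
Lemma dec_var p n : dec (cpair 1 (cpair p (cpair 0 n))) = FPred p (TVar n).
Proof. by rewrite /dec decF_S /decBody !unp_cpair. Qed.
Lemma dec_const p k : dec (cpair 1 (cpair p (cpair 1 k))) = FPred p (TConst k).
Proof. by rewrite /dec decF_S /decBody !unp_cpair. Qed.

Lemma dec_code B : dec (Defs.code B) = B.
Proof.
elim: B => [|p [n|k]|A IA B IB|A IA B IB|A IA B IB|A IA|A IA] /=.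
- exact: dec_bot.
- exact: dec_var.
- exact: dec_const.
- by rewrite dec_and IA IB.
- by rewrite dec_or IA IB.
- by rewrite dec_imp IA IB.
- by rewrite dec_all IA.
- by rewrite dec_ex IA.
Qed.

Local Open Scope nat_scope.

Definition cstM x Cst c := digit (Nn x) Cst c.
Definition atomM (p u : nat) : Prop := digit 2 u p = 1.
Definition envOf x e n := digit (Nn x) e n.

Lemma table_sound x S Cst T :
  (forall c, c < x + 1 -> forall e, e < Bn x -> ConsClean x S Cst T c e) ->
  forall B, Defs.code B <= x -> forall e, e < Bn x ->
  (bTP x T (Defs.code B) e <-> truthT x (sdom x S) (cstM x Cst) atomM (envOf x e) B).
Proof.
move=> Hcons; elim=> [|p [n|k]|A IA B IB|A IA B IB|A IA B IB|A IA|A IA] Hx e He;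
  have [K0 [K1 [K2 [K3 [K4 [K5 [K6 K7]]]]]]] := Hcons _ (leq_ltn_trans Hx (eq_ind _ (fun z => x < z) (ltnSn x) _ (esym (addn1 x)))) e He.
- by split=> // H; apply: (K0 erefl).
- exact: K1.
- exact: K2.
- by rewrite (K3 _ _ erefl) /= (IA (cp_le1 Hx) e He) (IB (cp_le2 Hx) e He).
- by rewrite (K4 _ _ erefl) /= (IA (cp_le1 Hx) e He) (IB (cp_le2 Hx) e He).
- by rewrite (K5 _ _ erefl) /= (IA (cp_le1 Hx) e He) (IB (cp_le2 Hx) e He).
- rewrite (K6 _ erefl) /=.
  have E : forall u, sdom x S u ->
      (bTP x T (Defs.code A) ((u + Nn x * e) %% Bn x) <->
       truthT x (sdom x S) (cstM x Cst) atomM (trunc x (scons u (envOf x e))) A).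
    move=> u [Hu _]; rewrite (IA (cp_le Hx)); last by rewrite ltn_pmod // Bn_gt0.
    by rewrite /envOf envOf_step.
  by split=> H u Hu; [rewrite -E|rewrite E] => //; apply: H.
- rewrite (K7 _ erefl) /=.
  have E : forall u, sdom x S u ->
      (bTP x T (Defs.code A) ((u + Nn x * e) %% Bn x) <->
       truthT x (sdom x S) (cstM x Cst) atomM (trunc x (scons u (envOf x e))) A).
    move=> u [Hu _]; rewrite (IA (cp_le Hx)); last by rewrite ltn_pmod // Bn_gt0.
    by rewrite /envOf envOf_step.
  by split=> -[u [Hu H]]; exists u; split=> //; [rewrite -E|rewrite E].
Qed.

Definition tab x S Cst c e := truthT x (sdom x S) (cstM x Cst) atomM (envOf x e) (dec c).
Definition Ttab x S Cst :=
  \sum_(i < (x + 1) * Bn x) `[< tab x S Cst (i %/ Bn x) (i %% Bn x) >] * 2 ^ i.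

Lemma Ttab_lt x S Cst : Ttab x S Cst < 2 ^ ((x + 1) * Bn x).
Proof. by have [H _] := sum_digits 2 ((x + 1) * Bn x) (fun i => nat_of_bool `[< tab x S Cst (i %/ Bn x) (i %% Bn x) >]) (isT : 0 < 2) (fun i _ => leq_b1 _). Qed.

Lemma bTP_tab x S Cst c e : c < x + 1 -> e < Bn x ->
  (bTP x (Ttab x S Cst) c e <-> tab x S Cst c e).
Proof.
move=> cx ex.
have [_ H] := sum_digits 2 ((x + 1) * Bn x)
  (fun i => nat_of_bool `[< tab x S Cst (i %/ Bn x) (i %% Bn x) >]) (isT : 0 < 2) (fun i _ => leq_b1 _).
have Hi : c * Bn x + e < (x + 1) * Bn x.
  apply: (@leq_trans (c.+1 * Bn x)); first by rewrite mulSn [Bn x + _]addnC ltn_add2l.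
  by rewrite leq_pmul2r ?Bn_gt0 // -addn1.
rewrite /bTP /Ttab (H _ Hi) divnMDl ?Bn_gt0 // (divn_small ex) addn0.
rewrite -modnDml modnMl add0n (modn_small ex).
by case: asboolP.
Qed.

Lemma table_complete x S Cst c e : c < x + 1 -> e < Bn x ->
  ConsClean x S Cst (Ttab x S Cst) c e.
Proof.
move=> cx ex.
have bT : forall c', c' <= c -> forall e', e' < Bn x ->
    (bTP x (Ttab x S Cst) c' e' <-> tab x S Cst c' e').
  by move=> c' c'c e' e'x; apply: bTP_tab => //; apply: leq_ltn_trans cx.
have cc : c <= c by [].
rewrite /ConsClean; split.
  by move=> Ec; rewrite (bT _ cc _ ex) /tab Ec dec_bot.
split.
  by move=> p n Ec; rewrite (bT _ cc _ ex) /tab Ec dec_var.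
split.
  by move=> p k Ec; rewrite (bT _ cc _ ex) /tab Ec dec_const.
split.
  move=> a b Ec; have al : a <= c by rewrite Ec; apply: cp_le1 (leqnn _).
  have bl : b <= c by rewrite Ec; apply: cp_le2 (leqnn _).
  by rewrite !bT // /tab Ec dec_and.
split.
  move=> a b Ec; have al : a <= c by rewrite Ec; apply: cp_le1 (leqnn _).
  have bl : b <= c by rewrite Ec; apply: cp_le2 (leqnn _).
  by rewrite !bT // /tab Ec dec_or.
split.
  move=> a b Ec; have al : a <= c by rewrite Ec; apply: cp_le1 (leqnn _).
  have bl : b <= c by rewrite Ec; apply: cp_le2 (leqnn _).
  by rewrite !bT // /tab Ec dec_imp.
have E : forall a u, a <= c -> sdom x S u ->
    (bTP x (Ttab x S Cst) a ((u + Nn x * e) %% Bn x) <->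
     truthT x (sdom x S) (cstM x Cst) atomM (trunc x (scons u (envOf x e))) (dec a)).
  move=> a u al [Hu _]; rewrite bT //; last by rewrite ltn_pmod // Bn_gt0.
  by rewrite /tab /envOf envOf_step.
split.
  move=> a Ec; have al : a <= c by rewrite Ec; apply: cp_le (leqnn _).
  rewrite (bT _ cc _ ex) /tab Ec dec_all /=.
  by split=> H u Hu; [rewrite E|rewrite -E] => //; apply: H.
move=> a Ec; have al : a <= c by rewrite Ec; apply: cp_le (leqnn _).
rewrite (bT _ cc _ ex) /tab Ec dec_ex /=.
by split=> -[u [Hu H]]; exists u; split=> //; [rewrite E|rewrite -E].
Qed.

Local Open Scope ring_scope.

Lemma sound_dir (R : realType) (V : set R) : godel_set V ->
  forall A, sentence A -> SATclean (Defs.code A) -> one_satisfiable V A.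
Proof.
move=> [_ _ V0 V1] A sA [S [Cst [T [HS [HC [HT [[u Hu] [Hc [Hcons Hx]]]]]]]]].
set x := Defs.code A in HS HC HT Hc Hcons Hx.
have Ht : truthT x (sdom x S) (cstM x Cst) atomM (envOf x 0) A.
  exact: (proj1 (table_sound _ _ _ _ Hcons A (leqnn x) 0 (Bn_gt0 x)) Hx).
have Hq : (0 + qdepth A <= x)%N by rewrite add0n qdepth_code.
have Htr : truth (sdom x S) (cstM x Cst) atomM (envOf x 0) A.
  exact: (proj1 (truthT_truth x _ _ _ A 0 sA Hq (envOf x 0)) Ht).
have Htr' : truth (sdom x S) (cstM x Cst) atomM (fun _ => u) A.
  by apply: (proj1 (truth_closed _ _ _ A 0 sA (envOf x 0) (fun _ => u) _) Htr).
pose U := {v : nat | sdom x S v}.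
pose g c := if (c <= x)%N then cstM x Cst c else u.
have pg : forall c, sdom x S (g c).
  move=> c; rewrite /g; case: ifP => cx //; split; first exact: digit_ltN.
  by apply: Hc; rewrite addn1 ltnS.
pose cstG c : U := exist _ (g c) (pg c).
pose prdG (p : nat) (v : U) : R := if digit 2 (sval v) p == 1%N then 1 else 0.
pose u0 : U := exist _ u Hu.
have hom := truth_hom (fun _ : U => True) (sdom x S) cstG (cstM x Cst)
   (fun p v => prdG p v <> 0) atomM (@sval _ _) x.
have h1 : forall v : U, True -> sdom x S (sval v) by move=> v _; exact: (svalP v).
have h2 : forall v, sdom x S v -> exists w : U, True /\ sval w = v.
  by move=> v Hv; exists (exist _ v Hv).
have h3 : forall p (v : U), (p <= x)%N -> (prdG p v <> 0 <-> atomM p (sval v)).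
  move=> p v _; rewrite /prdG /atomM; case: eqP => H; split=> // _.
  exact/eqP/oner_neq0.
have h4 : forall c, (c <= x)%N -> sval (cstG c) = cstM x Cst c by move=> c cx; rewrite /= /g cx.
have Hhom : truth (fun _ : U => True) cstG (fun p v => prdG p v <> 0) (fun _ => u0) A.
  exact: (proj2 (hom h1 h2 h3 h4 A (bounded_code A x (leqnn x)) (fun _ => u0)) Htr').
have Hinv : forall p v, Inv 1 (prdG p v).
  by move=> p v; rewrite /Inv /prdG; case: eqP => _; [right; split|left].
have [Hi Hiff] := fval_truth R U u0 cstG prdG 1 (@ltr01 R) (lexx 1) Hinv A (fun _ => u0).
exists U, u0, cstG, prdG; split.
  by move=> p v; rewrite /prdG; case: eqP.
have := (proj2 Hiff) Hhom; case: Hi => [->//|[H1 H2] _].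
by apply/eqP; rewrite eq_le H1 H2.
Qed.

Lemma complete_dir (R : realType) (V : set R) : godel_set V -> zero_isolated V ->
  forall A, sentence A -> one_satisfiable V A -> SATclean (Defs.code A).
Proof.
move=> [_ HV01 V0 V1] [eps e0 Hiso] A sA [U [u0 [cstU [prdU [HV Hf]]]]].
set x := Defs.code A.
pose eps' : R := if eps <= 1 then eps else 1.
have e0' : 0 < eps' by rewrite /eps'; case: ifP.
have e1' : eps' <= 1 by rewrite /eps'; case: ifP => // /negbT; rewrite -ltNge => /ltW.
have ee : eps' <= eps by rewrite /eps'; case: ifP => // /negbT; rewrite -ltNge => /ltW.
have Hinv : forall p u, Inv eps' (prdU p u).
  move=> p u; have /andP[v0 v1] := HV01 _ (HV p u).
  case: (lerP eps (prdU p u)) => H.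
    by right; split=> //; apply: le_trans H.
  by left; apply: Hiso (HV p u) _; rewrite ger0_norm.
have [_ Hiff] := fval_truth R U u0 cstU prdU eps' e0' e1' Hinv A (fun _ => u0).
have HtU : truth (fun _ => True) cstU (fun p u => prdU p u <> 0) (fun _ => u0) A.
  by apply/(proj1 Hiff); rewrite Hf; apply/eqP/oner_neq0.
pose tau (u : U) : nat := (\sum_(p < x + 1) `[< prdU p u <> 0%R >] * 2 ^ p)%N.
have tau_prop : forall u, (tau u < Nn x)%N /\
    forall p, (p < x + 1)%N -> digit 2 (tau u) p = `[< prdU p u <> 0%R >].
  move=> u; exact: (sum_digits 2 (x + 1) (fun p => nat_of_bool `[< prdU p u <> 0%R >]) isT (fun _ _ => leq_b1 _)).
pose S := (\sum_(v < Nn x) `[< exists u, tau u = v >] * 2 ^ v)%N.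
have [S_lt S_dig] := sum_digits 2 (Nn x) (fun v => nat_of_bool `[< exists u, tau u = v >]) isT (fun _ _ => leq_b1 _).
pose Cst := (\sum_(c < x + 1) tau (cstU c) * (Nn x) ^ c)%N.
have [C_lt C_dig] := sum_digits (Nn x) (x + 1) (fun c => tau (cstU c)) (Nn_gt0 x)
   (fun c _ => proj1 (tau_prop (cstU c))).
have hom := truth_hom (fun _ : U => True) (sdom x S) cstU (cstM x Cst)
   (fun p u => prdU p u <> 0) atomM tau x.
have h1 : forall u, True -> sdom x S (tau u).
  move=> u _; have [H1 _] := tau_prop u; split=> //.
  by rewrite S_dig // asboolT //; exists u.
have h2 : forall v, sdom x S v -> exists u, True /\ tau u = v.
  move=> v [vl vs]; rewrite S_dig // in vs; move: vs; case: asboolP => // [[u Hu]] _.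
  by exists u.
have h3 : forall p u, (p <= x)%N -> (prdU p u <> 0 <-> atomM p (tau u)).
  move=> p u px; have [_ H2] := tau_prop u; rewrite /atomM H2 ?addn1 ?ltnS //.
  by case: asboolP.
have h4 : forall c, (c <= x)%N -> tau (cstU c) = cstM x Cst c.
  by move=> c cx; rewrite /cstM C_dig // addn1 ltnS.
have HtM : truth (sdom x S) (cstM x Cst) atomM (fun _ => tau u0) A.
  exact: (proj1 (hom h1 h2 h3 h4 A (bounded_code A x (leqnn x)) (fun _ => u0)) HtU).
have HtM0 : truth (sdom x S) (cstM x Cst) atomM (envOf x 0) A.
  by apply: (proj1 (truth_closed _ _ _ A 0 sA (fun _ => tau u0) (envOf x 0) _) HtM).
have Hq : (0 + qdepth A <= x)%N by rewrite add0n qdepth_code.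
have HtT : truthT x (sdom x S) (cstM x Cst) atomM (envOf x 0) A.
  exact: (proj2 (truthT_truth x _ _ _ A 0 sA Hq (envOf x 0)) HtM0).
exists S, Cst, (Ttab x S Cst).
split=> //; split=> //; split; first exact: Ttab_lt.
split; first by exists (tau u0); have [H1 _] := tau_prop u0; split=> //; rewrite S_dig // asboolT //; exists u0.
split.
  move=> c cx; rewrite C_dig // S_dig; last exact: (proj1 (tau_prop (cstU c))).
  by rewrite asboolT //; exists (cstU c).
split; first by move=> c cx e ex; exact: table_complete.
by rewrite bTP_tab ?addn1 ?Bn_gt0 // /tab /x dec_code.
Qed.

Theorem mainTheorem7 (R : realType) (V : set R) :
  godel_set V -> zero_isolated V ->
  decidable_on_sentences (one_satisfiable V).
Proof.
move=> gV zV; exists (compB 1 SATF) => A sA.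
have H := compB_ok SATF 1 [:: Defs.code A] erefl SATF_wf.
have E : one_satisfiable V A <-> holds [:: Defs.code A] SATF.
  rewrite SATF_iff; split; [exact: complete_dir|exact: sound_dir].
split=> HP.
  by rewrite asboolT in H; [exact: H|apply/E].
by rewrite asboolF in H; [exact: H|move/E].
Qed.
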